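(* Let $N\geq 0$ be an integer. Then for all $0<x<\pi/2$, \[ \alpha_N x^4<\left(\frac{x}{\sin x}\right)^2+\frac{x}{\tan x}-\left(2+4x^4\sum_{k=1}^{N}\frac{1}{(\pi^2k^2-x^2)^2}\right)<\beta_N x^4, \] with the best possible constants \[ \alpha_N=\frac{2\psi'''(N+1)}{3\pi^4},\qquad \beta_N=\frac{8\bigl((2N+1)^2\psi'(N+\tfrac12)-4(N+1)\bigr)}{(2N+1)^2\pi^4}. \]
   Context: $\psi=\Gamma'/\Gamma$ is the digamma function, and $\psi',\psi'''$ denote its first and third derivatives (polygamma functions). An empty sum is understood to be zero. *)

(* Defs.v *)
From Stdlib Require Import Reals Lra ClassicalEpsilon.
Open Scope R_scope.

(* Value of a convergent series sum_{k>=0} f k (chosen by epsilon; it is the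
   unique l with infinite_sum f l whenever the series converges). *)
Definition series_value (f : nat -> R) : R :=
  epsilon (inhabits 0) (fun l => infinite_sum f l).

(* Polygamma functions via their standard series:
   psi^(m)(s) = (-1)^(m+1) m! sum_{k>=0} 1/(s+k)^(m+1), for s > 0. *)
Definition psi1 (s : R) : R := series_value (fun k => / (s + INR k) ^ 2).
Definition psi3 (s : R) : R := 6 * series_value (fun k => / (s + INR k) ^ 4).

Fixpoint sum_1_to (f : nat -> R) (N : nat) : R :=
  match N with
  | O => 0
  | S n => sum_1_to f n + f (S n)
  end.

Definition F_N (N : nat) (x : R) : R :=
  (x / sin x) ^ 2 + x / tan x
  - (2 + 4 * x ^ 4 * sum_1_to (fun k => / (PI ^ 2 * INR k ^ 2 - x ^ 2) ^ 2) N).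

Definition alpha_N (N : nat) : R := 2 * psi3 (INR N + 1) / (3 * PI ^ 4).

Definition beta_N (N : nat) : R :=
  8 * ((2 * INR N + 1) ^ 2 * psi1 (INR N + / 2) - 4 * (INR N + 1))
  / ((2 * INR N + 1) ^ 2 * PI ^ 4).

(* Main.v *)
Require Import Defs.
From Stdlib Require Import Reals.
From Stdlib Require Import Lra Lia ClassicalEpsilon.
From Coquelicot Require Import Coquelicot.
Open Scope R_scope.


Fixpoint sm (f : nat -> R) (n : nat) : R :=
  match n with O => 0 | S k => sm f k + f k end.

Lemma sm_ext f g n : (forall j, (j < n)%nat -> f j = g j) -> sm f n = sm g n.
Proof. induction n; simpl; intros H; [reflexivity|].
rewrite IHn by (intros; apply H; lia). rewrite H by lia. reflexivity. Qed.

Lemma sm_split f a b : sm f (a + b) = sm f a + sm (fun j => f (a + j)%nat) b.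
Proof. induction b; simpl. rewrite Nat.add_0_r; ring.
rewrite Nat.add_succ_r; simpl; rewrite IHb; ring. Qed.

Lemma sm_shift f n : sm f (S n) = f O + sm (fun j => f (S j)) n.
Proof. induction n; simpl in *. ring. rewrite IHn. ring. Qed.

Lemma sm_rev f n : sm f n = sm (fun j => f (n - 1 - j)%nat) n.
Proof. induction n. reflexivity.
rewrite (sm_shift (fun j => f (S n - 1 - j)%nat)).
change (sm f (S n)) with (sm f n + f n). rewrite IHn.
replace (S n - 1 - 0)%nat with n by lia.
rewrite (sm_ext (fun j => f (S n - 1 - S j)%nat) (fun j => f (n - 1 - j)%nat)).
ring. intros; f_equal; lia. Qed.

Lemma sm_plus f g n : sm (fun j => f j + g j) n = sm f n + sm g n.
Proof. induction n; simpl. ring. rewrite IHn; ring. Qed.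

Lemma sm_minus f g n : sm (fun j => f j - g j) n = sm f n - sm g n.
Proof. induction n; simpl. ring. rewrite IHn; ring. Qed.

Lemma sm_scal c f n : sm (fun j => c * f j) n = c * sm f n.
Proof. induction n; simpl. ring. rewrite IHn; ring. Qed.

Lemma sm_le f g n : (forall j, (j < n)%nat -> f j <= g j) -> sm f n <= sm g n.
Proof. induction n; simpl; intros H. lra.
assert (f n <= g n) by (apply H; lia).
assert (sm f n <= sm g n) by (apply IHn; intros; apply H; lia). lra. Qed.

Lemma sm_abs f n : Rabs (sm f n) <= sm (fun j => Rabs (f j)) n.
Proof. induction n; simpl. rewrite Rabs_R0; lra.
eapply Rle_trans. apply Rabs_triang. lra. Qed.

Lemma sm_const c n : sm (fun _ => c) n = INR n * c.
Proof. induction n; simpl sm. simpl; ring. rewrite IHn, S_INR; ring. Qed.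

Lemma sm_nonneg f n : (forall j, 0 <= f j) -> 0 <= sm f n.
Proof. intros H; induction n; simpl. lra. specialize (H n); lra. Qed.

Lemma sm_mono f a b : (forall j, 0 <= f j) -> (a <= b)%nat -> sm f a <= sm f b.
Proof. intros H Hab. replace b with (a + (b - a))%nat by lia.
rewrite sm_split. assert (0 <= sm (fun j => f (a + j)%nat) (b - a)) by (apply sm_nonneg; auto). lra. Qed.

Lemma sum_f_sm f n : sum_f_R0 f n = sm f (S n).
Proof. induction n; simpl. ring. rewrite IHn. simpl. ring. Qed.

Lemma sm_tele g n : sm (fun j => g j - g (S j)) n = g O - g n.
Proof. induction n; simpl. ring. rewrite IHn; ring. Qed.

Lemma sm_shiftS q n : sm (fun i => q (S i)) n = sm q n - q O + q n.
Proof. induction n; simpl. ring. rewrite IHn; ring. Qed.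

Lemma dup z : sin z <> 0 ->
  / (sin z)^2 = /4 * (/ (sin (z/2))^2 + / (sin ((z+PI)/2))^2) /\
  cos z / sin z = /2 * (cos (z/2) / sin (z/2) + cos ((z+PI)/2) / sin ((z+PI)/2)).
Proof.
intros Hz.
set (w := z/2).
assert (E1 : z = 2 * w) by (unfold w; field).
assert (E2 : (z + PI)/2 = w + PI/2) by (unfold w; field).
rewrite E2. rewrite E1 in Hz |- *.
rewrite sin_2a, cos_2a in *. rewrite sin_plus, cos_plus, sin_PI2, cos_PI2.
assert (Hs : sin w <> 0) by (intro H; apply Hz; rewrite H; ring).
assert (Hc : cos w <> 0) by (intro H; apply Hz; rewrite H; ring).
pose proof (sin2_cos2 w) as P. unfold Rsqr in P.
split.
- replace (/ (2 * sin w * cos w) ^ 2) with ((sin w ^2 + cos w^2) / (2 * sin w * cos w) ^ 2)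
    by (assert (P2 : sin w ^2 + cos w^2 = 1) by nra; rewrite P2; unfold Rdiv; ring).
  field. split; auto.
- field. auto.
Qed.

Lemma ID (m : nat) : forall y, 0 < y < PI ->
  / (sin y)^2 = / (INR (2^m))^2 * sm (fun j => / (sin ((y + INR j * PI) / INR (2^m)))^2) (2^m) /\
  cos y / sin y = / INR (2^m) * sm (fun j => cos ((y + INR j * PI) / INR (2^m)) / sin ((y + INR j * PI) / INR (2^m))) (2^m).
Proof.
induction m as [|m IHm]; intros y Hy.
- simpl. replace ((y + 0 * PI) / 1) with y by field. split; field;
  apply Rgt_not_eq, sin_gt_0; lra.
- set (n := (2^m)%nat) in *.
  assert (Hn : (2 ^ S m = n + n)%nat) by (unfold n; simpl; lia).
  assert (Hn1 : 1 <= INR n) by (unfold n; rewrite pow_INR; apply pow_R1_Rle; simpl; lra).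
  rewrite Hn, !sm_split, plus_INR.
  destruct (IHm y Hy) as [I1 I2]. rewrite I1, I2. clear I1 I2.
  assert (Hz : forall j, (j < n)%nat -> 0 < (y + INR j * PI) / INR n < PI).
  { intros j Hj. assert (INR (S j) <= INR n) by (apply le_INR; lia). rewrite S_INR in H.
    split. apply Rdiv_lt_0_compat. pose proof (pos_INR j); pose proof PI_RGT_0; nra. lra.
    apply Rmult_lt_reg_r with (INR n). lra. unfold Rdiv. rewrite Rmult_assoc, Rinv_l by lra.
    pose proof PI_RGT_0; nra. }
  assert (Ha : forall j, (y + INR j * PI) / (INR n + INR n) = ((y + INR j * PI) / INR n) / 2)
    by (intros; field; lra).
  assert (Hb : forall j, (y + INR (n + j) * PI) / (INR n + INR n) = (((y + INR j * PI) / INR n) + PI) / 2)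
    by (intros; rewrite plus_INR; field; lra).
  split.
  + rewrite (sm_ext (fun j => / sin ((y + INR j * PI) / INR n) ^ 2)
      (fun j => /4 * (/ (sin (((y + INR j * PI) / INR n)/2))^2 + / (sin ((((y + INR j * PI) / INR n)+PI)/2))^2))).
    2:{ intros j Hj. apply dup. apply Rgt_not_eq, sin_gt_0; apply Hz; auto. }
    rewrite sm_scal, sm_plus.
    rewrite (sm_ext (fun j => / sin ((y + INR j * PI) / (INR n + INR n)) ^ 2) (fun j => / (sin (((y + INR j * PI) / INR n)/2))^2)) by (intros; rewrite Ha; auto).
    rewrite (sm_ext (fun j => / sin ((y + INR (n + j) * PI) / (INR n + INR n)) ^ 2) (fun j => / (sin ((((y + INR j * PI) / INR n)+PI)/2))^2)) by (intros; rewrite Hb; auto).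
    field. lra.
  + rewrite (sm_ext (fun j => cos ((y + INR j * PI) / INR n) / sin ((y + INR j * PI) / INR n))
      (fun j => /2 * (cos (((y + INR j * PI) / INR n)/2) / sin (((y + INR j * PI) / INR n)/2) + cos ((((y + INR j * PI) / INR n)+PI)/2) / sin ((((y + INR j * PI) / INR n)+PI)/2)))).
    2:{ intros j Hj. apply dup. apply Rgt_not_eq, sin_gt_0; apply Hz; auto. }
    rewrite sm_scal, sm_plus.
    rewrite (sm_ext (fun j => cos ((y + INR j * PI) / (INR n + INR n)) / sin ((y + INR j * PI) / (INR n + INR n))) (fun j => cos (((y + INR j * PI) / INR n)/2) / sin (((y + INR j * PI) / INR n)/2))) by (intros; rewrite Ha; auto).
    rewrite (sm_ext (fun j => cos ((y + INR (n + j) * PI) / (INR n + INR n)) / sin ((y + INR (n + j) * PI) / (INR n + INR n))) (fun j => cos ((((y + INR j * PI) / INR n)+PI)/2) / sin ((((y + INR j * PI) / INR n)+PI)/2))) by (intros; rewrite Hb; auto).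
    field. lra.
Qed.

Lemma sin_le_id t : 0 <= t -> sin t <= t.
Proof. intros H. destruct (Req_dec t 0) as [->|]. rewrite sin_0; lra.
left; apply sin_lt_x; lra. Qed.

Lemma tcos_le_sin t : 0 <= t <= PI / 2 -> t * cos t <= sin t.
Proof.
intros Ht.
destruct (MVT_gen (fun s => sin s - s * cos s) 0 t (fun s => s * sin s)) as [c [Hc E]].
- intros s _. auto_derive; auto. ring.
- intros s _. apply continuity_pt_filterlim, (ex_derive_continuous (fun s => sin s - s * cos s)).
  auto_derive; auto.
- rewrite Rmin_left, Rmax_right in Hc by lra.
  rewrite sin_0 in E.
  assert (0 <= sin c) by (apply sin_ge_0; pose proof PI_RGT_0; lra).
  assert (0 <= c * sin c * (t - 0)) by (apply Rmult_le_pos; [apply Rmult_le_pos|]; lra).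
  lra.
Qed.

Lemma E1 t : 0 < t < PI / 2 -> 0 <= / (sin t)^2 - / t^2 <= 1.
Proof.
intros Ht.
assert (Hs : 0 < sin t) by (apply sin_gt_0; lra).
assert (Hst : sin t <= t) by (apply sin_le_id; lra).
assert (Hc : 0 <= cos t) by (apply cos_ge_0; lra).
assert (Htc : t * cos t <= sin t) by (apply tcos_le_sin; lra).
pose proof (sin2_cos2 t) as P. unfold Rsqr in P.
split.
- assert (/ t^2 <= / (sin t)^2). { apply Rinv_le_contravar. nra. nra. } lra.
- replace (/ sin t ^ 2 - / t ^ 2) with ((t^2 - sin t^2) / (sin t ^2 * t^2)) by (field; lra).
  assert (t^2 - sin t^2 <= sin t^2 * t^2).
  { assert (0 <= t * cos t) by (apply Rmult_le_pos; lra).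
    assert ((t * cos t) * (t * cos t) <= sin t * sin t) by (apply Rmult_le_compat; lra).
    assert (cos t * cos t = 1 - sin t * sin t) by lra.
    replace (t^2 * sin t^2) with (t*t*(sin t * sin t)) by ring.
    replace (t * cos t * (t * cos t)) with (t*t*(cos t * cos t)) in H0 by ring.
    rewrite H1 in H0. simpl. nra. }
  assert (Hp : 0 < sin t ^2 * t^2) by (apply Rmult_lt_0_compat; apply pow_lt; lra).
  unfold Rdiv. apply Rmult_le_reg_r with (sin t ^2 * t^2). exact Hp.
  rewrite Rmult_assoc, Rinv_l by lra. lra.
Qed.

Definition cc t := cos t / sin t - / t.

Lemma E2 p q : 0 < p < PI/2 -> 0 < q < PI/2 -> Rabs (cc p - cc q) <= Rabs (p - q).
Proof.
intros Hp Hq.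
assert (Hm : 0 < Rmin q p) by (unfold Rmin; destruct Rle_dec; lra).
assert (HM : Rmax q p < PI/2) by (unfold Rmax; destruct Rle_dec; lra).
destruct (MVT_gen cc q p (fun s => / s^2 - / (sin s)^2)) as [c [Hc E]].
- intros s Hs.
  assert (0 < s < PI/2) by lra.
  assert (sin s > 0) by (apply sin_gt_0; lra).
  unfold cc. auto_derive. repeat split; lra.
  pose proof (sin2_cos2 s) as P. unfold Rsqr in P.
  field_simplify; try lra. f_equal. replace (cos s ^ 2) with (1 - sin s ^2) by (simpl; lra). ring.
- intros s Hs.
  assert (0 < s < PI/2) by lra.
  assert (sin s > 0) by (apply sin_gt_0; lra).
  apply continuity_pt_filterlim, (ex_derive_continuous cc).
  unfold cc; auto_derive. repeat split; lra.
- assert (H : 0 < c < PI/2) by lra.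
  pose proof (E1 c H).
  rewrite E, Rabs_mult.
  rewrite <- (Rmult_1_l (Rabs (p - q))) at 2.
  apply Rmult_le_compat_r. apply Rabs_pos.
  rewrite Rabs_left1 by lra. lra.
Qed.

Lemma cos_lb2 t : 0 <= t <= PI/2 -> 1 - t^2/2 <= cos t.
Proof.
intros Ht. replace t with (2 * (t/2)) at 2 by field. rewrite cos_2a_sin.
assert (0 <= sin (t/2)) by (apply sin_ge_0; pose proof PI_RGT_0; lra).
assert (sin (t/2) <= t/2) by (apply sin_le_id; lra). nra.
Qed.

Definition Aq (u t : R) := u^2 * / (sin t)^2 + u * (cos t / sin t).

Lemma pair_bound u a b : 0 < u -> 0 < a < PI/2 -> 0 < -b < PI/2 -> a + b = 2 * u ->
  Rabs (Aq u a + Aq u b - (u^2 / a^2 + u^2 / b^2 + u / a + u / b)) <= 4 * u^2.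
Proof.
intros Hu Ha Hb Hab.
pose proof (E1 a Ha) as Ea. pose proof (E1 (-b) Hb) as Eb.
pose proof (E2 a (-b) Ha Hb) as Ec.
rewrite sin_neg in Eb. 
assert (Hsa : sin a > 0) by (apply sin_gt_0; lra).
assert (Hsb : sin (-b) > 0) by (apply sin_gt_0; lra).
rewrite sin_neg in Hsb.
replace ((- sin b)^2) with ((sin b)^2) in Eb by ring.
replace ((- b)^2) with (b^2) in Eb by ring.
unfold cc in Ec. rewrite sin_neg, cos_neg in Ec.
replace (a - - b) with (2 * u) in Ec by lra.
rewrite (Rabs_right (2*u)) in Ec by lra.
replace (Aq u a + Aq u b - (u ^ 2 / a ^ 2 + u ^ 2 / b ^ 2 + u / a + u / b)) with
  (u^2 * (/ sin a ^2 - / a^2) + u^2 * (/ sin b ^ 2 - / b^2) + u * (cos a / sin a - / a - (cos b / - sin b - / - b)))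
  by (unfold Aq; field; repeat split; lra).
eapply Rle_trans. apply Rabs_triang.
eapply Rle_trans. apply Rplus_le_compat_r. apply Rabs_triang.
rewrite !Rabs_mult. rewrite (Rabs_right (u^2)) by (apply Rle_ge, pow2_ge_0).
rewrite (Rabs_right u) by lra.
rewrite (Rabs_right (/ sin a ^ 2 - / a ^ 2)) by lra.
rewrite (Rabs_right (/ sin b ^ 2 - / b ^ 2)) by lra.
assert (u^2 * (/ sin a ^ 2 - / a ^ 2) <= u^2) by (rewrite <- (Rmult_1_r (u^2)) at 2; apply Rmult_le_compat_l; [apply pow2_ge_0|lra]).
assert (u^2 * (/ sin b ^ 2 - / b ^ 2) <= u^2) by (rewrite <- (Rmult_1_r (u^2)) at 2; apply Rmult_le_compat_l; [apply pow2_ge_0|lra]).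
assert (u * Rabs (cos a / sin a - / a - (cos b / - sin b - / - b)) <= u * (2 * u)) by (apply Rmult_le_compat_l; lra).
nra.
Qed.

Lemma A0_bound u : 0 < u < 1 -> Rabs (Aq u u - 2) <= 2 * u^2.
Proof.
intros Hu. pose proof PI2_3_2.
assert (Hu' : 0 < u < PI/2) by lra.
pose proof (E1 u Hu') as E.
assert (Hs : 0 < sin u) by (apply sin_gt_0; lra).
assert (Hsu : sin u <= u) by (apply sin_le_id; lra).
assert (Htc : u * cos u <= sin u) by (apply tcos_le_sin; lra).
assert (Hcl : 1 - u^2/2 <= cos u) by (apply cos_lb2; lra).
assert (Hc : 0 <= cos u) by (apply cos_ge_0; lra).
assert (X1 : u^2 * / sin u ^2 - 1 = u^2 * (/ sin u ^2 - / u^2)) by (field; lra).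
assert (X2 : 0 <= u^2 * (/ sin u ^2 - / u^2) <= u^2).
{ split. apply Rmult_le_pos; [apply pow2_ge_0|lra].
  apply Rle_trans with (u^2*1); [apply Rmult_le_compat_l; [apply pow2_ge_0|lra]|lra]. }
assert (X3 : u * (cos u / sin u) <= 1).
{ unfold Rdiv. rewrite <- Rmult_assoc. apply Rmult_le_reg_r with (sin u); auto.
  rewrite Rmult_assoc, Rinv_l by lra. lra. }
assert (X4 : cos u <= u * (cos u / sin u)).
{ unfold Rdiv. rewrite <- Rmult_assoc. apply Rmult_le_reg_r with (sin u); auto.
  rewrite Rmult_assoc, Rinv_l by lra. nra. }
unfold Aq. apply Rabs_le. split; lra.
Qed.

Lemma Ah_bound u : 0 < u < 1 -> Rabs (Aq u (u - PI/2)) <= 6 * u^2.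
Proof.
intros Hu. pose proof PI2_3_2.
assert (Hs : 0 <= sin u) by (apply sin_ge_0; lra).
assert (Hsu : sin u <= u) by (apply sin_le_id; lra).
assert (Hcl : 1 - u^2/2 <= cos u) by (apply cos_lb2; lra).
assert (Hc : 1/2 <= cos u) by nra.
unfold Aq. rewrite sin_minus, cos_minus, sin_PI2, cos_PI2.
replace (sin u * 0 - cos u * 1) with (- cos u) by ring.
replace (cos u * 0 + sin u * 1) with (sin u) by ring.
replace (u ^ 2 * / (- cos u) ^ 2 + u * (sin u / - cos u)) with
  (u^2 * / (cos u)^2 - u * sin u * / cos u) by (field; lra).
assert (0 < / cos u <= 2).
{ split. apply Rinv_0_lt_compat; lra.
  replace 2 with (/ / 2) by field. apply Rinv_le_contravar; lra. }
assert (/ cos u ^2 = / cos u * / cos u) by (field; lra).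
assert (0 <= u * sin u <= u * u) by (split; [apply Rmult_le_pos|apply Rmult_le_compat_l]; lra).
rewrite H1.
assert (0 <= u^2 * (/ cos u * / cos u) <= u^2 * 4).
{ split. apply Rmult_le_pos. apply pow2_ge_0. nra. apply Rmult_le_compat_l. apply pow2_ge_0. nra. }
assert (0 <= u * sin u * / cos u <= u * u * 2).
{ split. apply Rmult_le_pos; lra. apply Rmult_le_compat; lra. }
apply Rabs_le. split; simpl in *; lra.
Qed.

Lemma approx x p : 0 < x < PI/2 ->
  Rabs (x^2 * / (sin x)^2 + x * (cos x / sin x) - 2
        - 4 * x^4 * sm (fun i => / (PI^2 * INR (S i)^2 - x^2)^2) ((2^p)%nat - 1))
  <= 3 * x^2 / INR (2^p).
Proof.
intros Hx. pose proof PI2_3_2 as Hpi.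
set (h := (2^p)%nat).
assert (Hn : (2^(S p) = h + h)%nat) by (unfold h; simpl; lia).
assert (Hh1 : (1 <= h)%nat) by (unfold h; clear; induction p; simpl; lia).
assert (Hh : 1 <= INR h) by (apply (le_INR 1); auto).
set (nr := INR (2^(S p))).
assert (Hnr : nr = 2 * INR h) by (unfold nr; rewrite Hn, plus_INR; ring).
set (u := x / nr).
assert (Hu : 0 < u < 1) by (unfold u; rewrite Hnr; split; [apply Rdiv_lt_0_compat; lra|];
  apply Rmult_lt_reg_r with (2 * INR h); [lra|]; unfold Rdiv; rewrite Rmult_assoc, Rinv_l by lra; pose proof PI_4; lra).
set (th := fun k => (x + k * PI) / nr).
assert (D1 : x^2 * / (sin x)^2 + x * (cos x / sin x) = sm (fun j => Aq u (th (INR j))) (2^(S p))).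
{ destruct (ID (S p) x ltac:(lra)) as [I1 I2]. rewrite I1, I2.
  unfold Aq. rewrite sm_plus, !sm_scal. fold nr. unfold th, u. field. lra. }
assert (Per : forall k, Aq u (th (k + nr)) = Aq u (th k)).
{ intros k. unfold th. replace ((x + (k + nr) * PI) / nr) with ((x + k * PI) / nr + PI) by (field; lra).
  unfold Aq. rewrite neg_sin, neg_cos. generalize (sin ((x + k * PI) / nr)) (cos ((x + k * PI) / nr)).
  intros s c. destruct (Req_dec s 0) as [->|Hs].
  - unfold Rdiv. rewrite Ropp_0, Rinv_0. ring.
  - field. auto. }
assert (D2 : sm (fun j => Aq u (th (INR j))) (2^(S p)) =
   Aq u (th 0) + Aq u (th (- INR h)) + sm (fun i => Aq u (th (INR (S i))) + Aq u (th (- INR (S i)))) (h - 1)).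
{ assert (Hk : exists k, h = S k) by (exists (h - 1)%nat; lia). destruct Hk as [k Hk].
  rewrite Hn. rewrite Hk. replace (S k - 1)%nat with k by lia.
  rewrite sm_split, sm_shift.
  rewrite (sm_rev (fun j => Aq u (th (INR (S k + j))))).
  rewrite (sm_ext (fun j => Aq u (th (INR (S k + (S k - 1 - j))))) (fun j => Aq u (th (- INR (S j))))).
  2:{ intros j Hj. rewrite <- (Per (- INR (S j))). f_equal. f_equal.
      assert (E : (S k + (S k - 1 - j) + S j = h + h)%nat) by lia.
      apply (f_equal INR) in E. rewrite !plus_INR in E.
      unfold nr. rewrite Hn, !plus_INR. lra. }
  change (sm (fun j => Aq u (th (- INR (S j)))) (S k)) with
     (sm (fun j => Aq u (th (- INR (S j)))) k + Aq u (th (- INR (S k)))).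
  rewrite sm_plus. change (INR 0) with 0. ring. }
assert (Hnr0 : 0 < nr) by lra.
assert (Th0 : th 0 = u) by (unfold th, u; field; lra).
assert (Thh : th (- INR h) = u - PI/2) by (unfold th, u; rewrite Hnr; field; lra).
assert (Pb : forall i, (i < h - 1)%nat -> Rabs (Aq u (th (INR (S i))) + Aq u (th (- INR (S i)))
   - 4 * x^4 * / (PI^2 * INR (S i)^2 - x^2)^2) <= 4 * u^2).
{ intros i Hi. 
  assert (Hk1 : 1 <= INR (S i)) by (apply (le_INR 1); lia).
  assert (Hk2 : INR (S i) + 1 <= INR h) by (rewrite <- S_INR; apply le_INR; lia).
  set (k := INR (S i)) in *.
  assert (Q1 : 0 < x + k * PI) by nra.
  assert (Q2 : 0 < k * PI - x) by nra.
  replace (4 * x ^ 4 * / (PI ^ 2 * k ^ 2 - x ^ 2) ^ 2) with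
    (u^2 / (th k)^2 + u^2 / (th (-k))^2 + u / (th k) + u / (th (-k))).
  2:{ unfold th, u. field. repeat split; try lra; intro Z; nra. }
  apply pair_bound. lra.
  - unfold th. split. apply Rdiv_lt_0_compat; lra.
    apply Rmult_lt_reg_r with nr. lra. unfold Rdiv. rewrite Rmult_assoc, Rinv_l by lra.
    rewrite Hnr. nra.
  - unfold th. replace (- ((x + - k * PI) / nr)) with ((k * PI - x) / nr) by (field; lra).
    split. apply Rdiv_lt_0_compat; lra.
    apply Rmult_lt_reg_r with nr. lra. unfold Rdiv. rewrite Rmult_assoc, Rinv_l by lra.
    rewrite Hnr. nra.
  - unfold th, u. field. lra. }
rewrite D1, D2, Th0, Thh.
replace (Aq u u + Aq u (u - PI / 2) + sm (fun i => Aq u (th (INR (S i))) + Aq u (th (- INR (S i)))) (h - 1) - 2 -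
   4 * x ^ 4 * sm (fun i => / (PI ^ 2 * INR (S i) ^ 2 - x ^ 2) ^ 2) (h - 1)) with
  ((Aq u u - 2) + Aq u (u - PI/2) + sm (fun i => Aq u (th (INR (S i))) + Aq u (th (- INR (S i)))
   - 4 * x^4 * / (PI^2 * INR (S i)^2 - x^2)^2) (h - 1)) by (rewrite sm_minus, sm_scal; ring).
eapply Rle_trans. apply Rabs_triang.
eapply Rle_trans. apply Rplus_le_compat_r. apply Rabs_triang.
pose proof (A0_bound u Hu). pose proof (Ah_bound u Hu).
assert (Rabs (sm (fun i => Aq u (th (INR (S i))) + Aq u (th (- INR (S i)))
   - 4 * x^4 * / (PI^2 * INR (S i)^2 - x^2)^2) (h - 1)) <= INR (h - 1) * (4 * u^2)).
{ eapply Rle_trans. apply sm_abs. rewrite <- sm_const. apply sm_le. auto. }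
rewrite minus_INR in H1 by lia. change (INR 1) with 1 in H1.
assert (Hu2 : u^2 = x^2 / (4 * INR h ^2)) by (unfold u; rewrite Hnr; field; lra).
rewrite Hu2 in *.
assert (3 * x^2 / INR h - (2 * (x ^ 2 / (4 * INR h ^ 2)) + 6 * (x ^ 2 / (4 * INR h ^ 2)) + (INR h - 1) * (4 * (x ^ 2 / (4 * INR h ^ 2))))
   = x^2 * (2 * INR h - 1) / INR h ^ 2) by (field; lra).
assert (0 <= x^2 * (2 * INR h - 1) / INR h ^ 2).
{ apply Rmult_le_pos. apply Rmult_le_pos. apply pow2_ge_0. lra. left; apply Rinv_0_lt_compat, pow_lt; lra. }
lra.
Qed.

Definition Dx (N : nat) (x : R) (i : nat) : R := / (PI^2 * INR (S (N + i))^2 - x^2)^2.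

Lemma sum_1_to_sm f n : sum_1_to f n = sm (fun i => f (S i)) n.
Proof. induction n; simpl; auto. rewrite IHn; auto. Qed.

Lemma FN_approx N x p : 0 < x < PI/2 -> (N <= (2^p)%nat - 1)%nat ->
  Rabs (F_N N x - 4 * x^4 * sm (Dx N x) ((2^p)%nat - 1 - N)) <= 3 * x^2 / INR (2^p).
Proof.
intros Hx HN. pose proof PI2_3_2.
assert (Hs : 0 < sin x) by (apply sin_gt_0; lra).
assert (Hc : 0 < cos x) by (apply cos_gt_0; lra).
pose proof (approx x p Hx) as Ap.
replace ((2^p)%nat - 1)%nat with (N + ((2^p)%nat - 1 - N))%nat in Ap by lia.
rewrite sm_split in Ap.
unfold F_N. rewrite sum_1_to_sm.
replace ((x / sin x)^2 + x / tan x) with (x^2 * / (sin x)^2 + x * (cos x / sin x))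
  by (unfold tan; field; lra).
unfold Dx.
replace (x ^ 2 * / sin x ^ 2 + x * (cos x / sin x) -
   (2 + 4 * x ^ 4 * sm (fun i : nat => / (PI ^ 2 * INR (S i) ^ 2 - x ^ 2) ^ 2) N) -
   4 * x ^ 4 * sm (fun i : nat => / (PI ^ 2 * INR (S (N + i)) ^ 2 - x ^ 2) ^ 2) (2 ^ p - 1 - N))
 with (x ^ 2 * / sin x ^ 2 + x * (cos x / sin x) - 2 -
      4 * x ^ 4 *
      (sm (fun i : nat => / (PI ^ 2 * INR (S i) ^ 2 - x ^ 2) ^ 2) N +
       sm (fun j : nat => / (PI ^ 2 * INR (S (N + j)) ^ 2 - x ^ 2) ^ 2) (2 ^ p - 1 - N))) by ring.
exact Ap.
Qed.

Lemma Un_cv_ext u v l : (forall n, u n = v n) -> Un_cv u l -> Un_cv v l.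
Proof. intros H C eps He. destruct (C eps He) as [K HK]. exists K. intros n Hn. rewrite <- H. auto. Qed.

Lemma Un_cv_const c : Un_cv (fun _ => c) c.
Proof. intros eps He. exists O. intros. unfold R_dist. replace (c - c) with 0 by ring. rewrite Rabs_R0. lra. Qed.

Lemma sum_scal c f K : sum_f_R0 (fun i => c * f i) K = c * sum_f_R0 f K.
Proof. rewrite !sum_f_sm. apply sm_scal. Qed.

Lemma inv2_bound s K : 0 < s -> sm (fun k => / (s + INR k)^2) K <= / s^2 + / s.
Proof.
intros Hs. destruct K as [|K].
- simpl sm. assert (0 < / s^2) by (apply Rinv_0_lt_compat, pow_lt; lra).
  assert (0 < / s) by (apply Rinv_0_lt_compat; lra). lra.
- rewrite sm_shift. simpl INR at 1. rewrite Rplus_0_r.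
  apply Rplus_le_compat_l.
  eapply Rle_trans.
  + apply (sm_le _ (fun j => / (s + INR j) - / (s + INR (S j)))).
    intros j _. pose proof (pos_INR j). rewrite S_INR.
    replace (/ (s + INR j) - / (s + (INR j + 1))) with (/ ((s + INR j) * (s + INR j + 1))) by (field; lra).
    apply Rinv_le_contravar. apply Rmult_lt_0_compat; lra. simpl. nra.
  + rewrite sm_tele. simpl INR. rewrite Rplus_0_r.
    assert (0 < / (s + INR K)) by (apply Rinv_0_lt_compat; pose proof (pos_INR K); lra). lra.
Qed.

Lemma cv_pos_bounded f B : (forall i, 0 <= f i) -> (forall K, sm f K <= B) ->
  { l | Un_cv (sum_f_R0 f) l }.
Proof.
intros Hf HB. apply growing_cv.
- intros n. simpl. specialize (Hf (S n)). lra.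
- exists B. intros y [i ->]. rewrite sum_f_sm. apply HB.
Qed.

Lemma cv_inv2 s : 0 < s -> { l | Un_cv (sum_f_R0 (fun k => / (s + INR k)^2)) l }.
Proof.
intros Hs. apply (cv_pos_bounded _ (/ s^2 + / s)).
- intros i. left. apply Rinv_0_lt_compat, pow_lt. pose proof (pos_INR i); lra.
- intros K. apply inv2_bound; auto.
Qed.

Lemma cv_inv4 s : 1 <= s -> { l | Un_cv (sum_f_R0 (fun k => / (s + INR k)^4)) l }.
Proof.
intros Hs. apply (cv_pos_bounded _ (/ s^2 + / s)).
- intros i. left. apply Rinv_0_lt_compat, pow_lt. pose proof (pos_INR i); lra.
- intros K. eapply Rle_trans; [|apply (inv2_bound s K); lra].
  apply sm_le. intros j _. pose proof (pos_INR j).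
  apply Rinv_le_contravar. apply pow_lt; lra.
  replace ((s + INR j)^4) with ((s + INR j)^2 * (s + INR j)^2) by ring.
  assert (1 <= (s + INR j)^2) by nra. 
  assert (0 <= (s + INR j)^2) by nra. nra.
Qed.

Lemma series_value_eq f l : Un_cv (sum_f_R0 f) l -> series_value f = l.
Proof.
intros H. unfold series_value.
assert (E : exists l, infinite_sum f l) by (exists l; exact H).
pose proof (epsilon_spec (inhabits 0) (fun l => infinite_sum f l) E) as S.
eapply uniqueness_sum. exact S. exact H.
Qed.

Lemma eq_small d : (forall eps, 0 < eps -> Rabs d <= eps) -> d = 0.
Proof.
intros H. destruct (Req_dec d 0); auto.
assert (0 < Rabs d) by (apply Rabs_pos_lt; auto).
specialize (H (Rabs d / 2) ltac:(lra)). lra.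
Qed.

Lemma INR_SNi N i : INR (S (N + i)) = INR N + 1 + INR i.
Proof. rewrite S_INR, plus_INR. ring. Qed.

Lemma LA N : Un_cv (sum_f_R0 (Dx N 0)) (alpha_N N / 4).
Proof.
pose proof PI_RGT_0.
assert (Hs : 1 <= INR N + 1) by (pose proof (pos_INR N); lra).
destruct (cv_inv4 (INR N + 1) Hs) as [l Hl].
assert (E : psi3 (INR N + 1) = 6 * l) by (unfold psi3; f_equal; apply series_value_eq; auto).
unfold alpha_N. rewrite E.
replace (2 * (6 * l) / (3 * PI ^ 4) / 4) with (/ PI^4 * l) by (field; lra).
apply Un_cv_ext with (fun K => / PI^4 * sum_f_R0 (fun k => / (INR N + 1 + INR k)^4) K).
- intros K. rewrite <- sum_scal. rewrite !sum_f_sm. apply sm_ext. intros j _.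
  unfold Dx. rewrite INR_SNi. pose proof (pos_INR j). field. lra.
- apply CV_mult. apply Un_cv_const. auto.
Qed.

Lemma cv_p N : Un_cv (fun K => / (2 * INR N + 1 + 2 * INR (S K))) 0.
Proof.
apply cv_infty_cv_0. intros M. destruct (INR_unbounded M) as [n0 Hn0].
exists n0. intros n Hn. apply le_INR in Hn. pose proof (pos_INR N); pose proof (pos_INR n). rewrite S_INR. lra.
Qed.

Lemma LB N : Un_cv (sum_f_R0 (Dx N (PI/2))) (beta_N N / 4).
Proof.
pose proof PI_RGT_0.
assert (Hs : 0 < INR N + / 2) by (pose proof (pos_INR N); lra).
destruct (cv_inv2 (INR N + / 2) Hs) as [l Hl].
assert (E : psi1 (INR N + / 2) = l) by (unfold psi1; apply series_value_eq; auto).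
set (p := fun i => / (2 * INR N + 1 + 2 * INR i)).
assert (Hp : forall i, 0 < 2 * INR N + 1 + 2 * INR i) by (intros i; pose proof (pos_INR N); pose proof (pos_INR i); lra).
assert (T : forall i, Dx N (PI/2) i = 4 / PI^4 * (p i ^2 + p (S i) ^2 - p i + p (S i))).
{ intros i. unfold Dx, p. rewrite INR_SNi, S_INR. pose proof (Hp i). pose proof (pos_INR N). pose proof (pos_INR i).
  assert (Hk : 1 <= INR N + 1 + INR i) by lra.
  assert (Hk2 : PI^2 <= (PI * (INR N + 1 + INR i))^2).
  { rewrite Rpow_mult_distr. rewrite <- (Rmult_1_r (PI^2)) at 1. apply Rmult_le_compat_l. apply pow2_ge_0. nra. }
  assert (0 < PI^2) by (apply pow_lt; lra).
  field. repeat split; try lra. }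
assert (PS : forall K, sum_f_R0 (Dx N (PI/2)) K =
   4 / PI^4 * (2 * sum_f_R0 (fun i => p i ^ 2) K - p O ^ 2 + p (S K) ^ 2 - p O + p (S K))).
{ intros K. rewrite !sum_f_sm. rewrite (sm_ext _ _ _ (fun i _ => T i)).
  rewrite sm_scal. f_equal.
  rewrite sm_plus, sm_minus, sm_plus.
  rewrite (sm_shiftS (fun i => p i ^ 2)), (sm_shiftS p). ring. }
assert (P2 : Un_cv (sum_f_R0 (fun i => p i ^ 2)) (/ 4 * l)).
{ apply Un_cv_ext with (fun K => / 4 * sum_f_R0 (fun k => / (INR N + / 2 + INR k)^2) K).
  - intros K. rewrite <- sum_scal. rewrite !sum_f_sm. apply sm_ext. intros j _.
    unfold p. pose proof (Hp j). field. lra.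
  - apply CV_mult. apply Un_cv_const. auto. }
pose proof (cv_p N) as C0.
assert (C1 : Un_cv (fun K => p (S K)) 0) by (apply C0).
assert (C2 : Un_cv (fun K => p (S K) ^ 2) 0).
{ apply Un_cv_ext with (fun K => p (S K) * p (S K)). intros; ring.
  replace 0 with (0 * 0) by ring. apply CV_mult; auto. }
apply Un_cv_ext with (fun K => 4 / PI^4 * (2 * sum_f_R0 (fun i => p i ^ 2) K - p O ^ 2 + p (S K) ^ 2 - p O + p (S K))).
{ intros K. symmetry. apply PS. }
replace (beta_N N / 4) with (4 / PI^4 * (2 * (/4 * l) - p O ^2 + 0 - p O + 0)).
2:{ unfold beta_N, p. rewrite E. simpl INR. pose proof (pos_INR N). field. lra. }
apply CV_mult. apply Un_cv_const.
apply CV_plus. apply CV_minus. apply CV_plus. apply CV_minus.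
- apply CV_mult. apply Un_cv_const. exact P2.
- apply Un_cv_const.
- exact C2.
- apply Un_cv_const.
- exact C1.
Qed.

Lemma Abig N i : 9 <= PI^2 * INR (S (N + i))^2.
Proof.
pose proof PI2_3_2. assert (1 <= INR (S (N + i))) by (apply (le_INR 1); lia).
assert (9 <= PI^2) by nra. 
assert (1 <= INR (S (N + i))^2) by nra. nra.
Qed.

Lemma Dx_pos N x i : 0 <= x <= PI/2 -> 0 < Dx N x i.
Proof.
intros Hx. pose proof (Abig N i). pose proof PI_4.
unfold Dx. apply Rinv_0_lt_compat, pow_lt. nra.
Qed.

Lemma Dx_lt N x y i : 0 <= x -> x < y -> y <= PI/2 -> Dx N x i < Dx N y i.
Proof.
intros H1 H2 H3. pose proof (Abig N i). pose proof PI_4.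
unfold Dx. set (A := PI ^ 2 * INR (S (N + i)) ^ 2) in *.
apply Rinv_lt_contravar. apply Rmult_lt_0_compat; apply pow_lt; nra.
assert (0 < A - y^2) by nra. assert (A - y^2 < A - x^2) by nra. nra.
Qed.

Lemma Dx_le_a N x i : 0 < x <= 1 -> Dx N x i <= (1 + x^2) * Dx N 0 i.
Proof.
intros Hx. pose proof (Abig N i).
unfold Dx. set (A := PI ^ 2 * INR (S (N + i)) ^ 2) in *.
set (t := x^2). assert (Ht : 0 < t <= 1) by (unfold t; split; nra).
replace (A - 0^2) with A by ring.
assert (P : A^2 <= (1 + t) * (A - t)^2).
{ assert (E : (1 + t) * (A - t)^2 - A^2 = t * (A^2 - 2*A - 2*A*t + t + t^2)) by ring.
  assert (0 <= A^2 - 2*A - 2*A*t + t + t^2) by nra.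
  assert (0 <= t * (A^2 - 2*A - 2*A*t + t + t^2)) by (apply Rmult_le_pos; lra). lra. }
assert (0 < A - t) by lra.
assert (0 < (A - t)^2) by (apply pow_lt; lra).
assert (0 < A^2) by (apply pow_lt; lra).
replace ((1 + t) * / A^2) with (/ (A^2 / (1 + t))) by (field; lra).
apply Rinv_le_contravar. apply Rdiv_lt_0_compat; lra.
apply Rmult_le_reg_r with (1 + t). lra. unfold Rdiv. rewrite Rmult_assoc, Rinv_l by lra. lra.
Qed.

Lemma Dx_ge_b N d i : 0 < d <= 1 -> (1 - 2 * d) * Dx N (PI/2) i <= Dx N (PI/2 - d) i.
Proof.
intros Hd. pose proof (Abig N i). pose proof PI_4. pose proof PI2_3_2.
unfold Dx. set (A := PI ^ 2 * INR (S (N + i)) ^ 2) in *.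
assert (HA : PI^2 <= A).
{ unfold A. assert (1 <= INR (S (N + i))) by (apply (le_INR 1); lia).
  assert (1 <= INR (S (N + i))^2) by nra. assert (0 <= PI^2) by nra. nra. }
set (B := A - (PI/2)^2). set (C := A - (PI/2 - d)^2).
assert (HB : 27/4 <= B) by (unfold B; nra).
assert (HC1 : B <= C) by (unfold B, C; nra).
assert (HC2 : C <= B + d * PI) by (unfold B, C; nra).
assert (0 < / C^2) by (apply Rinv_0_lt_compat, pow_lt; lra).
destruct (Rle_dec (1 - 2*d) 0) as [Hn|Hp].
- assert (0 <= / B^2) by (left; apply Rinv_0_lt_compat, pow_lt; lra). nra.
- assert (Hd2 : d < 1/2) by lra.
  assert (K : (1 - 2*d) * C^2 <= B^2).
  { assert (C^2 <= (B + d*PI)^2) by (apply pow_incr; lra).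
    assert ((1 - 2*d) * C^2 <= (1 - 2*d) * (B + d*PI)^2) by (apply Rmult_le_compat_l; lra).
    assert (E : (1 - 2*d) * (B + d*PI)^2 - B^2 = d * (-2*B^2 + (1 - 2*d) * (2*B*PI + d*PI^2))) by ring.
    assert ((1 - 2*d) * (2*B*PI + d*PI^2) <= 2*B*PI + PI^2) by nra.
    assert (2*B*PI + PI^2 <= 8 * B + 16) by nra.
    assert (8 * B + 16 <= 2 * B^2) by nra.
    assert (d * (-2*B^2 + (1 - 2*d) * (2*B*PI + d*PI^2)) <= 0) by (apply Rmult_le_0_l; lra).
    lra. }
  assert (0 < B^2) by (apply pow_lt; lra).
  assert (0 < C^2) by (apply pow_lt; lra).
  replace ((1 - 2*d) * / B^2) with ((1 - 2*d) / B^2) by (unfold Rdiv; ring).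
  apply Rmult_le_reg_r with (B^2 * C^2). nra.
  replace ((1 - 2 * d) / B ^ 2 * (B ^ 2 * C ^ 2)) with ((1 - 2*d) * C^2) by (field; lra).
  replace (/ C ^ 2 * (B ^ 2 * C ^ 2)) with (B^2) by (field; lra). lra.
Qed.

Lemma strict_lim u v A B : (forall i, u i <= v i) -> u O < v O ->
  Un_cv (sum_f_R0 u) A -> Un_cv (sum_f_R0 v) B -> A < B.
Proof.
intros H0 H1 HA HB.
assert (W : Un_cv (fun K => sum_f_R0 v K - sum_f_R0 u K) (B - A)) by (apply CV_minus; auto).
assert (L : forall K, v O - u O <= sum_f_R0 v K - sum_f_R0 u K).
{ intros K. rewrite !sum_f_sm, <- sm_minus, sm_shift.
  assert (0 <= sm (fun j => v (S j) - u (S j)) K) by (apply sm_nonneg; intros j; specialize (H0 (S j)); lra). lra. }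
pose proof (Rle_cv_lim L (Un_cv_const (v O - u O)) W). lra.
Qed.

Lemma le_lim c u v A B : (forall i, u i <= c * v i) ->
  Un_cv (sum_f_R0 u) A -> Un_cv (sum_f_R0 v) B -> A <= c * B.
Proof.
intros H HA HB.
assert (W : Un_cv (fun K => c * sum_f_R0 v K) (c * B)) by (apply CV_mult; auto; apply Un_cv_const).
apply (Rle_cv_lim (Un := sum_f_R0 u) (Vn := fun K => c * sum_f_R0 v K)); auto.
intros K. rewrite <- sum_scal, !sum_f_sm. apply sm_le. auto.
Qed.

Lemma ge_lim c u v A B : (forall i, c * v i <= u i) ->
  Un_cv (sum_f_R0 u) A -> Un_cv (sum_f_R0 v) B -> c * B <= A.
Proof.
intros H HA HB.
assert (W : Un_cv (fun K => c * sum_f_R0 v K) (c * B)) by (apply CV_mult; auto; apply Un_cv_const).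
apply (Rle_cv_lim (Un := fun K => c * sum_f_R0 v K) (Vn := sum_f_R0 u)); auto.
intros K. rewrite <- sum_scal, !sum_f_sm. apply sm_le. auto.
Qed.

Lemma nonneg_lim u A : (forall i, 0 <= u i) -> Un_cv (sum_f_R0 u) A -> 0 <= A.
Proof.
intros H HA. apply (Rle_cv_lim (Un := fun _ => 0) (Vn := sum_f_R0 u)); auto.
intros K. rewrite sum_f_sm. apply sm_nonneg; auto. apply Un_cv_const.
Qed.

Lemma Lx N x : 0 < x < PI/2 -> exists l, Un_cv (sum_f_R0 (Dx N x)) l /\ F_N N x = 4 * x^4 * l.
Proof.
intros Hx. pose proof (LB N) as HB.
destruct (cv_pos_bounded (Dx N x) (beta_N N / 4)) as [l Hl].
- intros i. left; apply Dx_pos; lra.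
- intros K. apply Rle_trans with (sm (Dx N (PI/2)) (S K)).
  + apply Rle_trans with (sm (Dx N (PI/2)) K).
    * apply sm_le. intros j _. left. apply Dx_lt; lra.
    * simpl. pose proof (Dx_pos N (PI/2) K). pose proof PI_RGT_0. assert (0 < Dx N (PI/2) K) by (apply Dx_pos; lra). lra.
  + rewrite <- sum_f_sm. apply growing_ineq; auto.
    intros n. simpl. assert (0 < Dx N (PI/2) (S n)) by (apply Dx_pos; pose proof PI_RGT_0; lra). lra.
- exists l. split; auto.
  apply Rminus_diag_uniq. apply eq_small. intros eps He.
  assert (Hx4 : 0 < x^4) by (apply pow_lt; lra).
  destruct (Hl (eps / (8 * x^4))) as [K0 HK0].
  { apply Rdiv_lt_0_compat; lra. }
  destruct (INR_unbounded (INR (N + K0 + 2) + 6 * x^2 / eps)) as [n0 Hn0].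
  assert (Q : 0 <= 6 * x^2 / eps) by (apply Rmult_le_pos; [nra|left; apply Rinv_0_lt_compat; lra]).
  assert (Hn0a : (N + K0 + 2 < n0)%nat) by (apply INR_lt; lra).
  assert (Hp : (n0 < 2^n0)%nat) by (apply Nat.pow_gt_lin_r; lia).
  assert (HN : (N <= 2^n0 - 1)%nat) by lia.
  pose proof (FN_approx N x n0 Hx HN) as Ap.
  set (M := (2^n0 - 1 - N)%nat) in *.
  assert (HM : (M = S (M - 1))%nat) by (unfold M; lia).
  assert (HM2 : (M - 1 >= K0)%nat) by (unfold M; lia).
  specialize (HK0 (M - 1)%nat HM2). unfold R_dist in HK0.
  rewrite sum_f_sm, <- HM in HK0.
  assert (I1 : 3 * x^2 / INR (2^n0) <= eps / 2).
  { assert (INR n0 < INR (2^n0)) by (apply lt_INR; auto).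
    assert (6 * x^2 / eps < INR (2^n0)) by (pose proof (pos_INR (N + K0 + 2)); lra).
    assert (0 < INR (2^n0)) by lra.
    apply Rmult_le_reg_r with (INR (2^n0) * 2 / eps). apply Rdiv_lt_0_compat; lra.
    replace (3 * x ^ 2 / INR (2 ^ n0) * (INR (2 ^ n0) * 2 / eps)) with (6 * x^2 / eps) by (field; lra).
    replace (eps / 2 * (INR (2 ^ n0) * 2 / eps)) with (INR (2^n0)) by (field; lra). lra. }
  assert (I2 : Rabs (4 * x^4 * sm (Dx N x) M - 4 * x^4 * l) <= eps / 2).
  { replace (4 * x^4 * sm (Dx N x) M - 4 * x^4 * l) with (4 * x^4 * (sm (Dx N x) M - l)) by ring.
    rewrite Rabs_mult, (Rabs_right (4 * x^4)) by lra.
    apply Rle_trans with (4 * x^4 * (eps / (8 * x^4))).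
    apply Rmult_le_compat_l; lra. right; field; lra. }
  replace (F_N N x - 4 * x ^ 4 * l) with ((F_N N x - 4 * x ^ 4 * sm (Dx N x) M) + (4 * x^4 * sm (Dx N x) M - 4 * x^4 * l)) by ring.
  eapply Rle_trans. apply Rabs_triang. lra.
Qed.

Theorem theorem7 (N : nat) :
  (forall x : R, 0 < x < PI / 2 ->
     alpha_N N * x ^ 4 < F_N N x < beta_N N * x ^ 4)
  /\ (forall a : R, (forall x : R, 0 < x < PI / 2 -> a * x ^ 4 < F_N N x) ->
        a <= alpha_N N)
  /\ (forall b : R, (forall x : R, 0 < x < PI / 2 -> F_N N x < b * x ^ 4) ->
        beta_N N <= b).
Proof.
pose proof (LA N) as HA. pose proof (LB N) as HB. pose proof PI2_3_2 as Hpi.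
assert (A0 : 0 <= alpha_N N / 4) by (apply (nonneg_lim (Dx N 0)); auto; intros; left; apply Dx_pos; lra).
assert (B0 : 0 <= beta_N N / 4) by (apply (nonneg_lim (Dx N (PI/2))); auto; intros; left; apply Dx_pos; lra).
split; [|split].
- intros x Hx. destruct (Lx N x Hx) as [l [Hl HF]]. rewrite HF.
  assert (Hx4 : 0 < x^4) by (apply pow_lt; lra).
  assert (alpha_N N / 4 < l).
  { apply (strict_lim (Dx N 0) (Dx N x)); auto.
    intros i; left; apply Dx_lt; lra. apply Dx_lt; lra. }
  assert (l < beta_N N / 4).
  { apply (strict_lim (Dx N x) (Dx N (PI/2))); auto.
    intros i; left; apply Dx_lt; lra. apply Dx_lt; lra. }
  split; nra.
- intros a Ha. apply Rnot_lt_le. intro Hlt.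
  set (al := alpha_N N) in *.
  set (x := Rmin (1/2) ((a - al) / (al + 1))).
  assert (Hq : 0 < (a - al) / (al + 1)) by (apply Rdiv_lt_0_compat; lra).
  assert (Hx1 : 0 < x <= 1/2) by (unfold x; unfold Rmin; destruct Rle_dec; lra).
  assert (Hx2 : x <= (a - al) / (al + 1)) by apply Rmin_r.
  assert (Hx : 0 < x < PI/2) by lra.
  specialize (Ha x Hx).
  destruct (Lx N x Hx) as [l [Hl HF]]. rewrite HF in Ha.
  assert (Hle : l <= (1 + x^2) * (al / 4)).
  { apply (le_lim _ (Dx N x) (Dx N 0)); auto. intros i; apply Dx_le_a; lra. }
  assert (Hx4 : 0 < x^4) by (apply pow_lt; lra).
  assert (a < (1 + x^2) * al).
  { apply Rmult_lt_reg_r with (x^4); auto. nra. }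
  assert (x^2 <= x) by nra.
  assert (al * x <= a - al).
  { apply Rle_trans with (al * ((a - al) / (al + 1))). apply Rmult_le_compat_l; lra.
    apply Rmult_le_reg_r with (al + 1). lra.
    replace (al * ((a - al) / (al + 1)) * (al + 1)) with (al * (a - al)) by (field; lra). nra. }
  nra.
- intros b Hb. apply Rnot_lt_le. intro Hlt.
  set (be := beta_N N) in *.
  set (d := Rmin 1 ((be - b) / (2 * be + 2))).
  assert (Hq : 0 < (be - b) / (2 * be + 2)) by (apply Rdiv_lt_0_compat; lra).
  assert (Hd1 : 0 < d <= 1) by (unfold d; unfold Rmin; destruct Rle_dec; lra).
  assert (Hd2 : d <= (be - b) / (2 * be + 2)) by apply Rmin_r.
  assert (Hx : 0 < PI/2 - d < PI/2) by lra.
  specialize (Hb (PI/2 - d) Hx).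
  destruct (Lx N (PI/2 - d) Hx) as [l [Hl HF]]. rewrite HF in Hb.
  assert (Hge : (1 - 2 * d) * (be / 4) <= l).
  { apply (ge_lim _ (Dx N (PI/2 - d)) (Dx N (PI/2))); auto. intros i; apply Dx_ge_b; lra. }
  assert (Hx4 : 0 < (PI/2 - d)^4) by (apply pow_lt; lra).
  assert (4 * l < b).
  { apply Rmult_lt_reg_r with ((PI/2 - d)^4); auto. nra. }
  assert (2 * d * be <= be - b).
  { apply Rle_trans with (2 * be * ((be - b) / (2 * be + 2))). nra.
    apply Rmult_le_reg_r with (2 * be + 2). lra.
    replace (2 * be * ((be - b) / (2 * be + 2)) * (2 * be + 2)) with (2 * be * (be - b)) by (field; lra). nra. }
  nra.
Qed.
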